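(* Let $(H,\partial)$ be a left (respectively extended) Cartan–Eilenberg system whose left couple $(A',E^1)$ converges conditionally to its colimit, i.e. $\lim_sH(-\infty,s)=0$ and $\operatorname{Rlim}_sH(-\infty,s)=0$. Then for each $j\in\mathbb{Z}$ (respectively each $j\in\mathbb{Z}\cup\{+\infty\}$) there is a short exact sequence $$0\to\operatorname{Rlim}_iH(i,j)\xrightarrow{\ \partial\ }H(-\infty,j)\xrightarrow{\ \tilde\eta\ }\lim_iH(i,j)\to0,$$ where the limits are over integers $i\le j$ as $i\to-\infty$, $\tilde\eta$ is induced by the maps $\eta\colon H(-\infty,j)\to H(i,j)$, and $\partial$ is a natural map of internal degree $-1$ induced by the maps $\partial\colon H(i,j)\to H(-\infty,i)$.
   Context: Let $\mathcal{A}$ be the category of $\mathbb{Z}$-graded $R$-modules. For a linearly ordered set $\mathcal{I}$, an $\mathcal{I}$-system $(H,\partial)$ consists of objects $H(i,j)$ for $i\le j$ in $\mathcal{I}$, functorial morphisms $\eta\colon H(i,j)\to H(i',j')$ (internal degree $0$) for $i\le i'$, $j\le j'$, and natural morphisms $\partial\colon H(j,k)\to H(i,j)$ (internal degree $-1$) for $i\le j\le k$, with $H(i,j)\xrightarrow{\eta}H(i,k)\xrightarrow{\eta}H(j,k)\xrightarrow{\partial}H(i,j)$ exact at each vertex. Left Cartan–Eilenberg system: $(\mathbb{Z}\cup\{-\infty\})$-system; extended: $(\mathbb{Z}\cup\{\pm\infty\})$-system. Left couple: $A'_s=H(-\infty,s)$, $E^1_s=H(s-1,s)$, $\alpha_s=\eta\colon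 H(-\infty,s-1)\to H(-\infty,s)$, $\beta_s=\eta\colon H(-\infty,s)\to H(s-1,s)$, $\gamma_s=\partial\colon H(s-1,s)\to H(-\infty,s-1)$. An exact couple converges conditionally to the colimit if $\lim_sA_s=0$ and $\operatorname{Rlim}_sA_s=0$, where $\operatorname{Rlim}=\lim^1$ (inverse limits along $\alpha$, and along $\eta\colon H(i-1,j)\to H(i,j)$ for $\lim_i$). *)

(* Defs.v *)
From HB Require Import structures.
From mathcomp Require Import all_boot all_order all_algebra.
Set Implicit Arguments. Unset Strict Implicit. Unset Printing Implicit Defensive.
Import Order.TTheory GRing.Theory Num.Theory.
Local Open Scope ring_scope.

(* An I-system over an index type I with order [le] consists of graded modules
   H i j (meaningful for le i j; values for other pairs are never constrained),
   degree-0 maps eta : H(i,j) -> H(i',j') and degree -1 maps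
   del : H(j,k) -> H(i,j), given degreewise as R-linear maps. *)
Record system (R : pzRingType) (I : Type) := System {
  H : I -> I -> int -> lmodType R;
  eta : forall (i j i' j' : I) (n : int), {linear H i j n -> H i' j' n};
  del : forall (i j k : I) (n : int), {linear H j k n -> H i j (n - 1)}
}.

Definition is_system (R : pzRingType) (I : Type) (le : I -> I -> bool)
    (S : system R I) : Prop :=
  (forall i j n (x : H S i j n), le i j -> eta S i j i j n x = x) /\
  (forall i j i' j' i'' j'' n (x : H S i j n),
      le i j -> le i' j' -> le i'' j'' ->
      le i i' -> le i' i'' -> le j j' -> le j' j'' ->
      eta S i' j' i'' j'' n (eta S i j i' j' n x) = eta S i j i'' j'' n x) /\
  (forall i j k i' j' k' n (x : H S j k n),
      le i j -> le j k -> le i' j' -> le j' k' ->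
      le i i' -> le j j' -> le k k' ->
      del S i' j' k' n (eta S j k j' k' n x)
      = eta S i j i' j' (n - 1) (del S i j k n x)) /\
  (* exactness of H(i,j) -> H(i,k) -> H(j,k) -> H(i,j) at each vertex *)
  (forall i j k n, le i j -> le j k ->
     (forall x : H S i k n,
        eta S i k j k n x = 0 <-> exists y : H S i j n, eta S i j i k n y = x) /\
     (forall x : H S j k n,
        del S i j k n x = 0 <-> exists y : H S i k n, eta S i k j k n y = x) /\
     (forall x : H S i j (n - 1),
        eta S i j i k (n - 1) x = 0 <-> exists y : H S j k n, del S i j k n y = x)).

(* Conditional convergence of the left couple: A'_s = H(-oo,s), with
   alpha_s = eta : H(-oo,s-1) -> H(-oo,s); lim_s A_s = 0 and Rlim_s A_s = 0,
   where Rlim = lim^1 = coker of (a_s) |-> (a_s - alpha a_{s-1}) on prod_s A_s. *)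
Definition cond_conv (R : pzRingType) (I : Type) (S : system R I)
    (fin : int -> I) (ninf : I) : Prop :=
  (forall n (a : forall s : int, H S ninf (fin s) n),
      (forall s, eta S ninf (fin (s - 1)) ninf (fin s) n (a (s - 1)) = a s) ->
      forall s, a s = 0) /\
  (forall n (b : forall s : int, H S ninf (fin s) n),
      exists a : forall s : int, H S ninf (fin s) n,
        forall s, a s - eta S ninf (fin (s - 1)) ninf (fin s) n (a (s - 1)) = b s).

(* The conclusion at index j: there is a (degreewise R-linear) map
   delta_n : prod_{i <= j} H(i,j)_n -> H(-oo,j)_{n-1}, the map induced by del
   (characterised below), whose kernel is exactly the image of the
   Rlim-defining map d(x)_i = x_i - eta x_{i-1}; so delta factors as an injection
   Rlim_i H(i,j) -> H(-oo,j) of degree -1; its image is the kernel of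
   eta~ : H(-oo,j) -> lim_i H(i,j); and eta~ is surjective. *)
Definition ses_at (R : pzRingType) (I : Type) (le : I -> I -> bool)
    (S : system R I) (fin : int -> I) (ninf : I) (j : I) : Prop :=
  exists delta : forall n : int, (forall i : int, H S (fin i) j n) -> H S ninf j (n - 1),
    (forall n y y', delta n (fun i => y i + y' i) = delta n y + delta n y') /\
    (forall n (r : R) y, delta n (fun i => r *: y i) = r *: delta n y) /\
    (* delta is induced by del : H(i,j) -> H(-oo,i): if a in prod_i H(-oo,i)
       satisfies a_i - alpha a_{i-1} = del y_i then delta y = eta a_i *)
    (forall n (y : forall i : int, H S (fin i) j n)
            (a : forall i : int, H S ninf (fin i) (n - 1)),
        (forall i, le (fin i) j ->
           a i - eta S ninf (fin (i - 1)) ninf (fin i) (n - 1) (a (i - 1))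
           = del S ninf (fin i) j n (y i)) ->
        forall i, le (fin i) j -> delta n y = eta S ninf (fin i) ninf j (n - 1) (a i)) /\
    (forall n (y : forall i : int, H S (fin i) j n),
        delta n y = 0 <->
        exists x : forall i : int, H S (fin i) j n,
          forall i, le (fin i) j ->
            y i = x i - eta S (fin (i - 1)) j (fin i) j n (x (i - 1))) /\
    (forall n (h : H S ninf j (n - 1)),
        (forall i, le (fin i) j -> eta S ninf j (fin i) j (n - 1) h = 0) <->
        exists y, delta n y = h) /\
    (forall m (x : forall i : int, H S (fin i) j m),
        (forall i, le (fin i) j -> eta S (fin (i - 1)) j (fin i) j m (x (i - 1)) = x i) ->
        exists h : H S ninf j m,
          forall i, le (fin i) j -> eta S ninf j (fin i) j m h = x i).

(* Index set Z u {-oo} (left Cartan-Eilenberg systems). *)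
Inductive lidx := LNInf | LFin of int.
Definition lle (a b : lidx) : bool :=
  match a, b with
  | LNInf, _ => true
  | LFin _, LNInf => false
  | LFin x, LFin y => (x <= y)%R
  end.

(* Index set Z u {-oo, +oo} (extended Cartan-Eilenberg systems). *)
Inductive xidx := XNInf | XFin of int | XPInf.
Definition xle (a b : xidx) : bool :=
  match a, b with
  | XNInf, _ => true
  | _, XPInf => true
  | XFin x, XFin y => (x <= y)%R
  | _, _ => false
  end.

(* Main.v *)
From HB Require Import structures.
From mathcomp Require Import all_boot all_order all_algebra zify.
From Stdlib Require Import ClassicalEpsilon.
Set Implicit Arguments. Unset Strict Implicit. Unset Printing Implicit Defensive.
Import Order.TTheory GRing.Theory Num.Theory.
Local Open Scope ring_scope.

Require Import Defs.
Lemma solve_diff (V : zmodType) (h : int -> V) :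
  exists w : int -> V, forall i, w i - w (i - 1) = h i.
Proof.
pose w (i : int) : V := match i with
  | Posz n => \sum_(k < n) h (k.+1)%:Z
  | Negz n => - \sum_(k < n.+1) h (- (k%:Z)) end.
exists w => -[[|n]|n].
- have -> : (Posz 0 - 1 = Negz 0) by lia.
  by rewrite /w big_ord0 big_ord1 oppr0 opprK add0r.
- have -> : (Posz n.+1 - 1 = Posz n) by lia.
  by rewrite /w big_ord_recr /= addrAC subrr add0r.
- have -> : (Negz n - 1 = Negz n.+1) by lia.
  rewrite /w (big_ord_recr n.+1) /= opprK addrA addNr add0r.
  by congr (h _); lia.
Qed.

Lemma const_down (V : Type) (P : int -> Prop) (f : int -> V) :
  (forall a b, a <= b -> P b -> P a) -> (forall k, P k -> f k = f (k-1)) ->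
  forall i i', P i -> P i' -> f i = f i'.
Proof.
move=> Pd Hf.
have key : forall i (d : nat) i', P i' -> i' - i = d%:Z -> f i = f i'.
  move=> i; elim=> [|d IH] i' Pi' e.
    by have -> : i' = i by lia.
  rewrite (Hf _ Pi'); apply: IH; last by lia.
  by apply: (Pd _ i') => //; lia.
move=> i i' Pi Pi'.
have [le_ii'|lt_i'i] := lerP i i'.
  apply: (key i `|i' - i|%N) => //; lia.
symmetry; apply: (key i' `|i - i'|%N) => //; lia.
Qed.
Lemma sub_swap (V : zmodType) (a x a' x' : V) : a - x = a' - x' -> x - x' = a - a'.
Proof.
move=> e; rewrite -(subrK x a) e addrAC [_ - x' - a']addrAC subrr add0r.
by rewrite addrC.
Qed.
Lemma alg1 (V : zmodType) (x X y W W' : V) :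
  W - W' = y - x + X -> y = (x + W) - (X + W').
Proof. by move=> e; rewrite opprD addrACA e addrC -addrA [X + (x - X)]addrCA subrr addr0 subrK. Qed.
Lemma alg2 (V : zmodType) (E E' G G' : V) :
  E - E' = G - G' -> G - E = G' - E'.
Proof. by move=> e; rewrite -(subrK E' E) e opprD opprB addrA subrKC. Qed.
Lemma dchoice (A : int -> Type) (Q : forall i, A i -> Prop) :
  (forall i, exists x, Q i x) -> exists f : forall i, A i, forall i, Q i (f i).
Proof.
move=> h; exists (fun i => proj1_sig (constructive_indefinite_description _ (h i))).
by move=> i; case: constructive_indefinite_description.
Qed.

Ltac sc_ Hn Hrefl Hf Pd := first [ done | exact: Hn | exact: Hrefl | by rewrite Hf; lia
  | match goal with H0 : is_true (?le (?fin ?b) ?j) |- is_true (?le (?fin ?a) ?j) =>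
      apply: (Pd a b); [lia|exact H0] end
  | match goal with H0 : (?le (?fin ?b) ?j) = true |- is_true (?le (?fin ?a) ?j) =>
      apply: (Pd a b); [lia|exact H0] end ].

Lemma generic (R : pzRingType) (I : Type) (le : I -> I -> bool) (S : system R I)
  (fin : int -> I) (ninf : I) (j : I)
  (Hsys : is_system le S) (Hcc : cond_conv S fin ninf)
  (Hn : forall x, le ninf x)
  (Hf : forall a b : int, le (fin a) (fin b) = (a <= b))
  (Hrefl : forall x, le x x)
  (Htr : forall x y z, le x y -> le y z -> le x z)
  (i0 : int) (Hi0 : le (fin i0) j) :
  ses_at le S fin ninf j.
Proof.
case: Hsys => Hid [Hcomp [Hnat Hex]]; case: Hcc => Hlim Hrlim.
have Pd : forall a b, a <= b -> le (fin b) j -> le (fin a) j.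
  by move=> a b ab hb; apply: Htr hb; rewrite Hf.
have U : forall n (c : forall i, H S ninf (fin i) n),
   (forall i, le (fin i) j ->
      eta S ninf (fin (i-1)) ninf (fin i) n (c (i-1)) = c i) ->
   forall i, le (fin i) j -> c i = 0.
  move=> n c hc i Pi.
  pose c' := fun s => if (s <= i) then c s
                      else eta S ninf (fin i) ninf (fin s) n (c i).
  have := Hlim n c' _ i; rewrite /c' lexx; apply => s.
  case: (lerP s i) => hs.
    case: ifPn => [_|h1]; last by exfalso; lia.
    by apply: hc; sc_ Hn Hrefl Hf Pd.
  case: ifPn => hs1.
    have e : s - 1 = i by lia.
    by rewrite e.
  by rewrite Hcomp //; sc_ Hn Hrefl Hf Pd.
pose b n (y : forall i, H S (fin i) j n) : forall i, H S ninf (fin i) (n-1) :=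
  fun i => if le (fin i) j then del S ninf (fin i) j n (y i) else 0.
pose aof n y := proj1_sig (constructive_indefinite_description _ (Hrlim (n-1) (b n y))).
have aofP : forall n y i, le (fin i) j ->
    aof n y i - eta S ninf (fin (i-1)) ninf (fin i) (n-1) (aof n y (i-1))
    = del S ninf (fin i) j n (y i).
  move=> n y i Pi; rewrite /aof; case: constructive_indefinite_description => a /= ha.
  by rewrite ha /b Pi.
pose delta n y := eta S ninf (fin i0) ninf j (n-1) (aof n y i0).
have Fconst : forall n (y : forall i, H S (fin i) j n) (a : forall i, H S ninf (fin i) (n-1)),
    (forall i, le (fin i) j ->
       a i - eta S ninf (fin (i-1)) ninf (fin i) (n-1) (a (i-1))
       = del S ninf (fin i) j n (y i)) ->
    forall i i', le (fin i) j -> le (fin i') j ->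
    eta S ninf (fin i) ninf j (n-1) (a i) = eta S ninf (fin i') ninf j (n-1) (a i').
  move=> n y a ha; apply: (const_down (P := fun i => le (fin i) j)) => // k Pk.
  have [_ [_ E3]] := Hex ninf (fin k) j n (Hn _) Pk.
  have z : eta S ninf (fin k) ninf j (n-1) (del S ninf (fin k) j n (y k)) = 0.
    by apply/E3; exists (y k).
  rewrite -(ha k Pk) linearB in z. rewrite Hcomp in z; try sc_ Hn Hrefl Hf Pd.
  by apply/eqP; rewrite -subr_eq0 z.
have K : forall n y (a : forall i, H S ninf (fin i) (n-1)),
    (forall i, le (fin i) j ->
       a i - eta S ninf (fin (i-1)) ninf (fin i) (n-1) (a (i-1))
       = del S ninf (fin i) j n (y i)) ->
    forall i, le (fin i) j -> delta n y = eta S ninf (fin i) ninf j (n-1) (a i).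
  move=> n y a ha i Pi.
  have c0 : a i0 - aof n y i0 = 0.
    apply: (U (n-1) (fun k => a k - aof n y k)) => // k Pk /=.
    rewrite linearB; apply: sub_swap.
    by rewrite (ha k Pk) aofP.
  move/eqP: c0; rewrite subr_eq0 => /eqP e0.
  by rewrite /delta -e0; exact: Fconst ha i0 i Hi0 Pi.
exists delta; split; [|split; [|split; [exact: K|split; [|split]]]].
- move=> n y y'.
  have -> : delta n (fun i => y i + y' i)
      = eta S ninf (fin i0) ninf j (n-1) (aof n y i0 + aof n y' i0).
    apply: (K n _ (fun i => aof n y i + aof n y' i)) Hi0 => i Pi /=.
    rewrite (linearD (eta S ninf (fin (i-1)) ninf (fin i) (n-1))) (linearD (del S ninf (fin i) j n)).
    by rewrite -!aofP // opprD addrACA.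
  by rewrite linearD.
- move=> n r y.
  have -> : delta n (fun i => r *: y i)
      = eta S ninf (fin i0) ninf j (n-1) (r *: aof n y i0).
    apply: (K n _ (fun i => r *: aof n y i)) Hi0 => i Pi /=.
    rewrite (linearZZ (eta S ninf (fin (i-1)) ninf (fin i) (n-1))) (linearZZ (del S ninf (fin i) j n)).
    by rewrite -scalerBr aofP.
  by rewrite linearZZ.
- move=> n y; split.
  + move=> d0.
    have hx : forall i, exists x : H S (fin i) j n, le (fin i) j ->
        del S ninf (fin i) j n x = aof n y i.
      move=> i; case Pi: (le (fin i) j); last by exists 0.
      have [_ [_ E3]] := Hex ninf (fin i) j n (Hn _) Pi.
      have : eta S ninf (fin i) ninf j (n-1) (aof n y i) = 0.
        by rewrite -(K n y (aof n y) (aofP n y) i Pi).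
      by case/E3 => x hx; exists x.
    have [x hxP] := dchoice hx.
    have hh : forall i, exists h : H S ninf j n, le (fin i) j ->
        eta S ninf j (fin i) j n h
        = y i - x i + eta S (fin (i-1)) j (fin i) j n (x (i-1)).
      move=> i; case Pi: (le (fin i) j); last by exists 0.
      have Pi1 : le (fin (i-1)) j by sc_ Hn Hrefl Hf Pd.
      have [_ [E2 _]] := Hex ninf (fin i) j n (Hn _) Pi.
      suff /E2 [h eh] : del S ninf (fin i) j n
          (y i - x i + eta S (fin (i-1)) j (fin i) j n (x (i-1))) = 0 by exists h.
      rewrite (linearD (del S ninf (fin i) j n)) (linearB (del S ninf (fin i) j n)) (hxP i Pi) (Hnat ninf (fin (i-1)) j ninf (fin i) j); try sc_ Hn Hrefl Hf Pd.
      rewrite (hxP (i-1) Pi1) -(aofP n y i Pi).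
      by rewrite (addrAC (aof n y i)) subrr add0r addNr.
    have [h hP] := dchoice hh.
    have [w hw] := solve_diff h.
    exists (fun i => x i + eta S ninf j (fin i) j n (w i)) => i Pi.
    rewrite linearD (Hcomp ninf j (fin (i-1)) j (fin i) j); try sc_ Hn Hrefl Hf Pd.
    apply: alg1; rewrite -linearB hw; exact: hP.
  + case=> x hx.
    have ha : forall i, le (fin i) j ->
        del S ninf (fin i) j n (x i) - eta S ninf (fin (i-1)) ninf (fin i) (n-1)
          (del S ninf (fin (i-1)) j n (x (i-1))) = del S ninf (fin i) j n (y i).
      move=> i Pi; rewrite (hx i Pi) (linearB (del S ninf (fin i) j n)) (Hnat ninf (fin (i-1)) j ninf (fin i) j) //; sc_ Hn Hrefl Hf Pd.
    rewrite (K n y _ ha i0 Hi0).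
    have [_ [_ E3]] := Hex ninf (fin i0) j n (Hn _) Hi0.
    by apply/E3; exists (x i0).
- move=> n h; split.
  + move=> hz.
    have hb : forall i, exists bi : H S ninf (fin i) (n-1), le (fin i) j ->
        eta S ninf (fin i) ninf j (n-1) bi = h.
      move=> i; case Pi: (le (fin i) j); last by exists 0.
      have [E1 _] := Hex ninf (fin i) j (n-1) (Hn _) Pi.
      by case/E1: (hz i Pi) => bi e; exists bi.
    have [bb hbP] := dchoice hb.
    have hy : forall i, exists yi : H S (fin i) j n, le (fin i) j ->
        del S ninf (fin i) j n yi
        = bb i - eta S ninf (fin (i-1)) ninf (fin i) (n-1) (bb (i-1)).
      move=> i; case Pi: (le (fin i) j); last by exists 0.
      have Pi1 : le (fin (i-1)) j by sc_ Hn Hrefl Hf Pd.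
      have [_ [_ E3]] := Hex ninf (fin i) j n (Hn _) Pi.
      suff /E3 [yi e] : eta S ninf (fin i) ninf j (n-1)
          (bb i - eta S ninf (fin (i-1)) ninf (fin i) (n-1) (bb (i-1))) = 0.
        by exists yi.
      rewrite linearB Hcomp; try sc_ Hn Hrefl Hf Pd.
      by rewrite (hbP i Pi) (hbP (i-1) Pi1) subrr.
    have [yy hyP] := dchoice hy.
    exists yy.
    by rewrite (K n yy bb (fun i Pi => esym (hyP i Pi)) i0 Hi0) (hbP i0 Hi0).
  + case=> y <- i Pi.
    rewrite (K n y (aof n y) (aofP n y) i Pi).
    have [E1 _] := Hex ninf (fin i) j (n-1) (Hn _) Pi.
    by apply/E1; exists (aof n y i).
- move=> m x hx.
  have c0 : forall i, le (fin i) j -> del S ninf (fin i) j m (x i) = 0.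
    apply: (U (m-1) (fun i => del S ninf (fin i) j m (x i))) => i Pi /=.
    have Pi1 : le (fin (i-1)) j by sc_ Hn Hrefl Hf Pd.
    rewrite -(Hnat ninf (fin (i-1)) j ninf (fin i) j) ?(hx i Pi) //; sc_ Hn Hrefl Hf Pd.
  have hg : forall i, exists g : H S ninf j m, le (fin i) j ->
      eta S ninf j (fin i) j m g = x i.
    move=> i; case Pi: (le (fin i) j); last by exists 0.
    have [_ [E2 _]] := Hex ninf (fin i) j m (Hn _) Pi.
    by case/E2: (c0 i Pi) => g e; exists g.
  have [g hgP] := dchoice hg.
  have he : forall i, exists e : H S ninf (fin i) m, le (fin i) j ->
      eta S ninf (fin i) ninf j m e = g i - g (i-1).
    move=> i; case Pi: (le (fin i) j); last by exists 0.
    have Pi1 : le (fin (i-1)) j by sc_ Hn Hrefl Hf Pd.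
    have [E1 _] := Hex ninf (fin i) j m (Hn _) Pi.
    suff /E1 [e ee] : eta S ninf j (fin i) j m (g i - g (i-1)) = 0 by exists e.
    rewrite linearB (hgP i Pi) -(Hcomp ninf j (fin (i-1)) j (fin i) j); try sc_ Hn Hrefl Hf Pd.
    by rewrite (hgP (i-1) Pi1) (hx i Pi) subrr.
  have [e' he'] := dchoice he.
  have [e hee] := Hrlim m e'.
  pose f k := g k - eta S ninf (fin k) ninf j m (e k).
  exists (f i0) => i Pi.
  have -> : f i0 = f i.
    apply: (const_down (P := fun k => le (fin k) j) (f := f)) => // k Pk.
    have Pk1 : le (fin (k-1)) j by sc_ Hn Hrefl Hf Pd.
    rewrite /f; apply: alg2.
    have := he' k Pk; rewrite -hee linearB Hcomp; try sc_ Hn Hrefl Hf Pd.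
  rewrite /f linearB (hgP i Pi).
  have [E1 _] := Hex ninf (fin i) j m (Hn _) Pi.
  have -> : eta S ninf j (fin i) j m (eta S ninf (fin i) ninf j m (e i)) = 0.
    by apply/E1; exists (e i).
  by rewrite subr0.
Qed.

Lemma xle_refl x : xle x x.
Proof. case: x => [|x|]; [done| exact: (lexx x) | done]. Qed.
Lemma xle_trans x y z : xle x y -> xle y z -> xle x z.
Proof.
case: x => [|x|]; case: y => [|y|]; case: z => [|z|] => //.
exact: le_trans.
Qed.
Lemma lle_refl x : lle x x.
Proof. case: x => [|x]; [done| exact: (lexx x)]. Qed.
Lemma lle_trans x y z : lle x y -> lle y z -> lle x z.
Proof.
case: x => [|x]; case: y => [|y]; case: z => [|z] => //.
exact: le_trans.
Qed.

Theorem proposition7p3 :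
  (forall (R : pzRingType) (S : system R lidx),
      is_system lle S -> cond_conv S LFin LNInf ->
      forall j : int, ses_at lle S LFin LNInf (LFin j)) /\
  (forall (R : pzRingType) (S : system R xidx),
      is_system xle S -> cond_conv S XFin XNInf ->
      forall j : xidx, j <> XNInf -> ses_at xle S XFin XNInf j).
Proof.
split.
- move=> R S Hs Hc j.
  apply: (@generic _ _ _ _ _ _ _ Hs Hc _ _ lle_refl lle_trans j).
  + by case.
  + by [].
  + exact: (lexx j).
- move=> R S Hs Hc [|j|] // _.
  + apply: (@generic _ _ _ _ _ _ _ Hs Hc _ _ xle_refl xle_trans j).
    * by case.
    * by [].
    * exact: (lexx j).
  + apply: (@generic _ _ _ _ _ _ _ Hs Hc _ _ xle_refl xle_trans 0).
    * by case.
    * by [].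
    * by [].
Qed.
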